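(* Let $a,b\geq 0$ with $a+b\leq 1$. Then (1) $4ab\leq a+b$. (2) If moreover $a,b>0$, then the function $$x\mapsto S(a,b,x)=1-\frac{a^2b^2}{(a+b+1)(a+b)}-\frac{ab(a+1)(b+1)(a+b+ab+2)}{(a+b)(a+b+1)(a+b+2)}\,x$$ is negative for all $x\geq c(a,b)$, where $$c(a,b)=\frac{(a+b)(a+b-2ab)(a+b+1)}{ab\big((a+b+1)(a+b-2ab)+ab(a+b)\big)}.$$ *)

(* Defs.v *)
From Stdlib Require Import Reals.
Open Scope R_scope.

Definition S (a b x : R) : R :=
  1 - (a^2 * b^2) / ((a + b + 1) * (a + b))
    - (a * b * (a + 1) * (b + 1) * (a + b + a * b + 2))
        / ((a + b) * (a + b + 1) * (a + b + 2)) * x.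

Definition c (a b : R) : R :=
  ((a + b) * (a + b - 2 * a * b) * (a + b + 1))
  / (a * b * ((a + b + 1) * (a + b - 2 * a * b) + a * b * (a + b))).

(* Main.v *)
Require Import Defs.
From Stdlib Require Import Reals Lra Psatz.
Open Scope R_scope.

Lemma keyf (s p : R) : 0 < s -> 0 < p -> 4 * p <= s * s -> s <= 1 ->
  0 < s*s*(s+1)*(s+1) - 2*p*s*(s+1)*(s+2) - 4*p*p*(s+1)*(s+1) + s*(s+2)*p*p.
Proof.
  intros hs0 hp hps hs.
  assert (h1 : s*s*(s+1)*(s+1) - 2*p*s*(s+1)*(s+2) >= s*s*(s+1)*(2 - s*s)/2).
  { assert (0 <= (s*s - 4*p) * (s*(s+1)*(s+2))).
    { apply Rmult_le_pos; [lra|]. apply Rmult_le_pos; [|lra]. apply Rmult_le_pos; lra. }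
    nra. }
  assert (h2 : 4*p*p*(s+1)*(s+1) <= s*s*s*s*(s+1)*(s+1)/4).
  { assert (p*p <= s*s*s*s/16) by nra. nra. }
  assert (h3 : s*s*(s+1)*(2 - s*s)/2 >= s*s*s*s*(s+1)*(s+1)/4).
  { assert (2*(2-s*s) - s*s*(s+1) >= 0) by nra.
    assert (0 <= s*s*(s+1)) by nra. nra. }
  assert (0 < s*(s+2)*p*p) by (apply Rmult_lt_0_compat; nra).
  lra.
Qed.

Theorem lemma5 (a b : R) (ha : 0 <= a) (hb : 0 <= b) (hab : a + b <= 1) :
  4 * a * b <= a + b /\
  (0 < a -> 0 < b -> forall x : R, c a b <= x -> S a b x < 0).
Proof.
  assert (H1 : 4 * a * b <= a + b).
  { assert (0 <= (a+b)*(1-(a+b))) by (apply Rmult_le_pos; lra).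
    assert (0 <= (a-b)*(a-b)) by apply Rle_0_sqr. nra. }
  split; [exact H1|].
  intros pa pb x hx.
  assert (hp : 0 < a * b) by (apply Rmult_lt_0_compat; lra).
  assert (hps : 4 * (a*b) <= (a+b) * (a+b)).
  { assert (0 <= (a-b)*(a-b)) by apply Rle_0_sqr.
    assert ((a+b)*(a+b) - 4*(a*b) = (a-b)*(a-b)) by ring. lra. }
  assert (hs : 0 < a + b) by lra.
  assert (ES : S a b x = 1 - (a*b)*(a*b)/((a+b)*((a+b)+1))
     - (a*b) * ((a*b)+(a+b)+1) * ((a+b)+(a*b)+2) / ((a+b)*((a+b)+1)*((a+b)+2)) * x).
  { unfold S. field. split; lra. }
  assert (Ec : c a b = (a+b)*((a+b)-2*(a*b))*((a+b)+1)
     / ((a*b) * (((a+b)+1)*((a+b)-2*(a*b)) + (a*b)*(a+b)))).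
  { unfold c. f_equal; ring. }
  rewrite ES. rewrite Ec in hx.
  revert hx. generalize (a*b) (a+b) hp hps hs hab. clear.
  intros p s hp hps hs hs1 hx.
  assert (h2p : 0 < s - 2 * p).
  { assert (s*s <= s*1) by (apply Rmult_le_compat_l; lra). lra. }
  set (D := (s+1)*(s-2*p) + p*s) in *.
  assert (hD : 0 < D).
  { unfold D. assert (0 < (s+1)*(s-2*p)) by (apply Rmult_lt_0_compat; lra).
    assert (0 < p*s) by (apply Rmult_lt_0_compat; lra). lra. }
  assert (HDe : D = (s+1)*(s-2*p) + p*s) by reflexivity.
  clearbody D.
  set (K := p * (p+s+1) * (s+p+2) / (s*(s+1)*(s+2))).
  set (Q := p*p/(s*(s+1))).
  set (c0 := s*(s-2*p)*(s+1) / (p * D)) in *.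
  assert (hK : 0 < K).
  { unfold K. apply Rdiv_lt_0_compat; apply Rmult_lt_0_compat; try lra;
    apply Rmult_lt_0_compat; try lra; apply Rmult_lt_0_compat; lra. }
  assert (EKc : K * c0 = (p+s+1)*(s+p+2)*(s-2*p) / ((s+2)*D)).
  { unfold K, c0. field. repeat split; lra. }
  assert (Kx : K * c0 <= K * x) by (apply Rmult_le_compat_l; lra).
  assert (main : 1 - Q < K * c0).
  { rewrite EKc.
    assert (EQ : 1 - Q = (s*(s+1) - p*p) / (s*(s+1))).
    { unfold Q. field. lra. }
    rewrite EQ.
    assert (f := keyf s p hs hp hps hs1).
    assert (Ed : (p+s+1)*(s+p+2)*(s-2*p)*(s*(s+1)) - (s*(s+1) - p*p)*((s+2)*D)
       = p * (s*s*(s+1)*(s+1) - 2*p*s*(s+1)*(s+2) - 4*p*p*(s+1)*(s+1) + s*(s+2)*p*p)).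
    { rewrite HDe. ring. }
    assert (0 < p * (s*s*(s+1)*(s+1) - 2*p*s*(s+1)*(s+2) - 4*p*p*(s+1)*(s+1) + s*(s+2)*p*p))
      by (apply Rmult_lt_0_compat; lra).
    assert (hB : 0 < s*(s+1)) by (apply Rmult_lt_0_compat; lra).
    assert (hM : 0 < (s+2)*D) by (apply Rmult_lt_0_compat; lra).
    apply (Rmult_lt_reg_r (s*(s+1) * ((s+2)*D))); [apply Rmult_lt_0_compat; lra|].
    replace ((s * (s + 1) - p * p) / (s * (s + 1)) * (s * (s + 1) * ((s + 2) * D)))
      with ((s * (s + 1) - p * p) * ((s + 2) * D)) by (field; lra).
    replace ((p + s + 1) * (s + p + 2) * (s - 2 * p) / ((s + 2) * D) * (s * (s + 1) * ((s + 2) * D)))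
      with ((p+s+1)*(s+p+2)*(s-2*p)*(s*(s+1))) by (field; lra).
    lra. }
  unfold K, Q in *. lra.
Qed.
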